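(* Let $e,m_->0$. There exist constants $0<C_1\le C_1'$ and $0<C_2\le C_2'$, depending only on $e,m_-$ (in particular independent of $k,\xi$), such that for every $k\in\mathbb{Z}\setminus\{0\}$, $\xi\in\mathbb{R}$ and every solution $B(t)=(B_1(t),B_2(t))^\top\in\mathbb{C}^2$ of $\frac{d}{dt}B=L_-(t)B$ on $[0,\infty)$, the functional $$\mathcal{E}_-(t)=\sqrt{\tfrac{p_2}{m_2}}|B_1|^2+2\frac{h_2}{\sqrt{m_2p_2}}\Re(B_1\bar B_2)+\sqrt{\tfrac{m_2}{p_2}}|B_2|^2$$ satisfies, for all $t\ge0$, $$C_1\mathcal{E}_-(0)\le\mathcal{E}_-(t)\le C_1'\mathcal{E}_-(0),\qquad C_2|B(0)|\le|B(t)|\le C_2'|B(0)|.$$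
   Context: For fixed $k\in\mathbb{Z}\setminus\{0\}$, $\xi\in\mathbb{R}$ let $\alpha(t)=k^2+(\xi-kt)^2$, so $\partial_t\alpha=-2k(\xi-kt)$. Define $h_2(t)=\frac14\alpha^{-1}\partial_t\alpha$, $m_2(t)=\frac{1}{\sqrt{m_-}}\alpha^{1/2}$, $p_2(t)=\frac{4\pi e^2}{\sqrt{m_-}\alpha^{1/2}}+\frac{2k^2\sqrt{m_-}}{\alpha^{3/2}}+\frac{1}{\sqrt{m_-}}\alpha^{1/2}$, and $$L_-(t)=\begin{pmatrix}-h_2(t) & -m_2(t)\\ p_2(t) & h_2(t)\end{pmatrix}.$$ (This is the Fourier-side symmetrized form, in the sheared coordinates $X=x-yt$, $Y=y$, of the linearized electron Euler–Poisson system around the Couette flow.) *)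

(* Defs.v *)
From Stdlib Require Import Reals Lra.
From Coquelicot Require Import Coquelicot.
Open Scope R_scope.

(* Parameters: e (electron charge), mm = m_- (mass), k (as a real), xi. *)
Definition alpha (k xi t : R) : R := k ^ 2 + (xi - k * t) ^ 2.
Definition dalpha (k xi t : R) : R := - 2 * k * (xi - k * t).

Definition h2 (k xi t : R) : R := / 4 * / alpha k xi t * dalpha k xi t.
Definition m2 (mm k xi t : R) : R := / sqrt mm * sqrt (alpha k xi t).
Definition p2 (e mm k xi t : R) : R :=
  4 * PI * e ^ 2 / (sqrt mm * sqrt (alpha k xi t))
  + 2 * k ^ 2 * sqrt mm / (alpha k xi t * sqrt (alpha k xi t))
  + / sqrt mm * sqrt (alpha k xi t).

Definition is_solution (e mm k xi : R) (B1 B2 : R -> C) : Prop :=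
  (forall t, 0 <= t -> filterlim B1 (at_right t) (locally (B1 t))
                     /\ filterlim B2 (at_right t) (locally (B2 t))) /\
  (forall t, 0 < t ->
     is_derive B1 t (- (RtoC (h2 k xi t) * B1 t) - RtoC (m2 mm k xi t) * B2 t)%C /\
     is_derive B2 t (RtoC (p2 e mm k xi t) * B1 t + RtoC (h2 k xi t) * B2 t)%C).

Definition Eminus (e mm k xi : R) (B1 B2 : R -> C) (t : R) : R :=
  let h := h2 k xi t in let m := m2 mm k xi t in let p := p2 e mm k xi t in
  sqrt (p / m) * (Cmod (B1 t)) ^ 2
  + 2 * (h / sqrt (m * p)) * Re (B1 t * Cconj (B2 t))%C
  + sqrt (m / p) * (Cmod (B2 t)) ^ 2.

Definition normB (B1 B2 : R -> C) (t : R) : R :=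
  sqrt ((Cmod (B1 t)) ^ 2 + (Cmod (B2 t)) ^ 2).

(* Main.v *)
Require Import Defs.
From Stdlib Require Import Reals ZArith Lra Lia.
From Coquelicot Require Import Coquelicot.
Open Scope R_scope.

Lemma Re_derive (B : R -> C) t l : is_derive B t l -> is_derive (fun s => Re (B s)) t (Re l).
Proof.
  intros H. unfold is_derive in *.
  eapply filterdiff_ext_lin.
  - eapply (filterdiff_comp' B (fun z : C_R_NormedModule => fst z) t).
    + exact H.
    + apply filterdiff_linear. apply is_linear_fst.
  - intros y. simpl. reflexivity.
Qed.

Lemma Im_derive (B : R -> C) t l : is_derive B t l -> is_derive (fun s => Im (B s)) t (Im l).
Proof.
  intros H. unfold is_derive in *.
  eapply filterdiff_ext_lin.
  - eapply (filterdiff_comp' B (fun z : C_R_NormedModule => snd z) t).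
    + exact H.
    + apply filterdiff_linear. apply is_linear_snd.
  - intros y. simpl. reflexivity.
Qed.

Definition RC (f : R -> R) := filterlim f (at_right 0) (locally (f 0)).

Lemma Re_RC (B : R -> C) : filterlim B (at_right 0) (locally (B 0)) -> RC (fun s => Re (B s)).
Proof.
  intros H. unfold RC. eapply filterlim_comp. exact H.
  destruct (B 0) as [u v]. apply (continuous_fst (U:=R_UniformSpace) (V:=R_UniformSpace) u v).
Qed.

Lemma Im_RC (B : R -> C) : filterlim B (at_right 0) (locally (B 0)) -> RC (fun s => Im (B s)).
Proof.
  intros H. unfold RC. eapply filterlim_comp. exact H.
  destruct (B 0) as [u v]. apply (continuous_snd (U:=R_UniformSpace) (V:=R_UniformSpace) u v).
Qed.

Lemma RC_plus f g : RC f -> RC g -> RC (fun t => f t + g t).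
Proof.
  intros Hf Hg. unfold RC.
  eapply filterlim_comp_2; [exact Hf | exact Hg |].
  apply (filterlim_plus (K:=R_AbsRing) (V:=R_NormedModule)).
Qed.

Lemma RC_mult f g : RC f -> RC g -> RC (fun t => f t * g t).
Proof.
  intros Hf Hg. unfold RC.
  eapply filterlim_comp_2; [exact Hf | exact Hg |].
  apply (filterlim_mult (K:=R_AbsRing)).
Qed.

Lemma RC_cont f : continuous f 0 -> RC f.
Proof.
  intros H. unfold RC. eapply filterlim_filter_le_1; [|exact H].
  intros P HP. unfold at_right, within. eapply filter_imp; [|exact HP]. auto.
Qed.
Lemma mono (f df : R -> R) : RC f -> (forall t, 0 < t -> is_derive f t (df t)) ->
  (forall t, 0 < t -> df t <= 0) -> forall t, 0 <= t -> f t <= f 0.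
Proof.
  intros Hc Hd Hn t Ht.
  destruct (Req_dec t 0) as [->|Ht0]; [lra|].
  destruct (Rle_or_lt (f t) (f 0)) as [|Hgt]; [auto|exfalso].
  assert (Hdp : 0 < f t - f 0) by lra.
  unfold RC in Hc. pose proof (proj1 (filterlim_locally (F:=at_right 0) (U:=R_UniformSpace) f (f 0)) Hc) as Hc2; clear Hc; rename Hc2 into Hc.
  specialize (Hc (mkposreal _ Hdp)).
  destruct Hc as [eta Heta].
  set (y := Rmin (eta/2) (t/2)).
  assert (Hy0 : 0 < y) by (unfold y; destruct eta; simpl; apply Rmin_glb_lt; lra).
  assert (Hyt : y < t) by (unfold y; generalize (Rmin_r (eta/2) (t/2)); lra).
  assert (Hye : y <= eta/2) by (unfold y; apply Rmin_l).
  assert (Hb : ball (f 0) (mkposreal _ Hdp) (f y)).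
  { apply Heta. 2: exact Hy0. 
    change (Rabs (y - 0) < eta). rewrite Rminus_0_r, Rabs_pos_eq by lra.
    destruct eta; simpl in *; lra. }
  change (Rabs (f y - f 0) < f t - f 0) in Hb.
  apply Rabs_def2 in Hb.
  destruct (MVT_gen f y t df) as [c [Hc1 Hc2]].
  - intros x Hx. apply Hd. rewrite Rmin_left in Hx by lra. lra.
  - intros x Hx. rewrite Rmin_left in Hx by lra.
    apply continuity_pt_filterlim. apply (ex_derive_continuous (K:=R_AbsRing) (V:=R_NormedModule)).
    exists (df x). apply Hd. lra.
  - rewrite Rmin_left in Hc1 by lra. rewrite Rmax_right in Hc1 by lra.
    assert (df c <= 0) by (apply Hn; lra).
    assert (df c * (t - y) <= 0) by (apply Rmult_le_0_r; lra).
    lra.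
Qed.

Lemma RC_opp f : RC f -> RC (fun t => - f t).
Proof.
  intros H. unfold RC. eapply filterlim_comp; [exact H|].
  apply (filterlim_opp (K:=R_AbsRing) (V:=R_NormedModule)).
Qed.

Lemma RC_pow2 f : RC f -> RC (fun t => f t ^ 2).
Proof.
  intros H. pose proof (RC_mult f f H H) as H2. unfold RC in *.
  replace (f 0 ^ 2) with (f 0 * f 0) by ring.
  eapply filterlim_ext; [|exact H2]. intros; simpl; ring.
Qed.

Lemma RC_const (a : R) : RC (fun _ => a).
Proof. apply RC_cont. apply continuous_const. Qed.

Lemma RC_form (aa bb cc g x1 y1 x2 y2 : R -> R) : RC aa -> RC bb -> RC cc -> RC g ->
  RC x1 -> RC y1 -> RC x2 -> RC y2 ->
  RC (fun s => (aa s * (x1 s ^ 2 + y1 s ^ 2) + 2 * bb s * (x1 s * x2 s + y1 s * y2 s)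
                       + cc s * (x2 s ^ 2 + y2 s ^ 2)) * g s).
Proof.
  intros Ha Hb Hc Hg H1 H2 H3 H4.
  apply RC_mult; auto.
  apply RC_plus. apply RC_plus.
  - apply RC_mult; auto. apply RC_plus; apply RC_pow2; auto.
  - apply RC_mult. apply RC_mult; auto. apply RC_const.
    apply RC_plus; apply RC_mult; auto.
  - apply RC_mult; auto. apply RC_plus; apply RC_pow2; auto.
Qed.

Lemma mono_inc (f df : R -> R) : RC f -> (forall t, 0 < t -> is_derive f t (df t)) ->
  (forall t, 0 < t -> 0 <= df t) -> forall t, 0 <= t -> f 0 <= f t.
Proof.
  intros Hc Hd Hn t Ht.
  assert (- f t <= - f 0); [|lra].
  apply (mono (fun s => - f s) (fun s => - df s)); auto.
  - apply RC_opp; auto.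
  - intros s Hs. apply (is_derive_opp (K:=R_AbsRing) (V:=R_NormedModule)). auto.
  - intros s Hs. specialize (Hn s Hs). lra.
Qed.

Lemma core (aa bb cc G x1 y1 x2 y2 : R -> R) (daa dbb dcc dG h m p sg t : R) :
  is_derive aa t daa -> is_derive bb t dbb -> is_derive cc t dcc -> is_derive G t dG ->
  is_derive x1 t (- h * x1 t - m * x2 t) ->
  is_derive y1 t (- h * y1 t - m * y2 t) ->
  is_derive x2 t (p * x1 t + h * x2 t) ->
  is_derive y2 t (p * y1 t + h * y2 t) ->
  aa t <> 0 -> h = bb t * p / aa t -> m = cc t * p / aa t ->
  is_derive (fun s => (aa s * (x1 s ^ 2 + y1 s ^ 2) + 2 * bb s * (x1 s * x2 s + y1 s * y2 s)
                       + cc s * (x2 s ^ 2 + y2 s ^ 2)) * exp (sg * G s)) t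
   (exp (sg * G t) * ((daa * (x1 t ^ 2 + y1 t ^ 2) + 2 * dbb * (x1 t * x2 t + y1 t * y2 t)
                       + dcc * (x2 t ^ 2 + y2 t ^ 2))
      + sg * dG * (aa t * (x1 t ^ 2 + y1 t ^ 2) + 2 * bb t * (x1 t * x2 t + y1 t * y2 t)
                       + cc t * (x2 t ^ 2 + y2 t ^ 2)))).
Proof.
  intros Ha Hb Hc HG H1 H2 H3 H4 Ha0 Hh Hm.
  subst h m.
  auto_derive.
  - repeat split; eexists; eassumption.
  - rewrite (is_derive_unique (fun x : R => aa x) _ _ Ha), (is_derive_unique (fun x : R => bb x) _ _ Hb), (is_derive_unique (fun x : R => cc x) _ _ Hc),
      (is_derive_unique (fun x : R => G x) _ _ HG), (is_derive_unique (fun x : R => x1 x) _ _ H1), (is_derive_unique (fun x : R => y1 x) _ _ H2),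
      (is_derive_unique (fun x : R => x2 x) _ _ H3), (is_derive_unique (fun x : R => y2 x) _ _ H4).
    field. exact Ha0.
Qed.

Lemma two_ks K s : Rabs (2*K*s) <= K^2 + s^2.
Proof.
  rewrite Rabs_mult, Rabs_mult, (Rabs_pos_eq 2) by lra.
  pose proof (Rabs_pos K); pose proof (Rabs_pos s).
  assert (K^2 = Rabs K ^2) by (rewrite <- pow2_abs; auto).
  assert (s^2 = Rabs s ^2) by (rewrite <- pow2_abs; auto).
  rewrite H1, H2. pose proof (pow2_ge_0 (Rabs K - Rabs s)). nra.
Qed.

Lemma bnd_dAA (c mm K s a : R) : 0 <= c -> 0 <= mm -> 1 <= K^2 -> a = K^2 + s^2 ->
  Rabs (-(c/a^2 + 4*K^2*mm/a^3) * (-2*K*s)) <= (c + 4*mm)*(K^2/a).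
Proof.
  intros Hc Hm HK Ha.
  assert (Hs : 0 <= s^2) by apply pow2_ge_0.
  assert (Hap : 0 < a) by lra.
  set (v := /a).
  assert (Hv : 0 < v) by (apply Rinv_0_lt_compat; lra).
  assert (Hav : a * v = 1) by (unfold v; field; lra).
  assert (E1 : c/a^2 + 4*K^2*mm/a^3 = c*v^2 + 4*K^2*mm*v^3) by (unfold v; field; lra).
  assert (E2 : K^2/a = K^2 * v) by (unfold v; field; lra).
  rewrite E1, E2.
  pose proof (two_ks K s) as HT. rewrite <- Ha in HT.
  set (T := Rabs (2*K*s)) in *.
  assert (Hpos : 0 <= c*v^2 + 4*K^2*mm*v^3).
  { assert (0 <= v^2) by apply pow2_ge_0. assert (0 <= v^3) by (apply pow_le; lra).
    assert (0 <= c*v^2) by (apply Rmult_le_pos; lra).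
    assert (0 <= 4*K^2*mm) by nra.
    assert (0 <= 4*K^2*mm*v^3) by (apply Rmult_le_pos; lra). lra. }
  replace (Rabs (-(c*v^2 + 4*K^2*mm*v^3) * (-2*K*s))) with ((c*v^2 + 4*K^2*mm*v^3) * T).
  2:{ unfold T. rewrite (Rabs_mult (- _)), Rabs_Ropp, (Rabs_pos_eq (c*v^2 + _)) by auto.
      replace (-2*K*s) with (-(2*K*s)) by ring. rewrite Rabs_Ropp. auto. }
  assert (HTv : T * v <= 1) by (rewrite <- Hav; apply Rmult_le_compat_r; lra).
  assert (HKv : K^2 * v <= 1) by (rewrite <- Hav; apply Rmult_le_compat_r; lra).
  assert (H1 : c*v^2*T <= c*K^2*v).
  { assert (c*v^2*T = c*v*(T*v)) by ring. assert (c*v*(T*v) <= c*v) by (apply (Rmult_le_compat_l (c*v)) in HTv; nra).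
    assert (c*v*1 <= c*v*K^2) by (apply Rmult_le_compat_l; nra). nra. }
  assert (H2 : 4*K^2*mm*v^3*T <= 4*mm*K^2*v).
  { assert (4*K^2*mm*v^3*T = 4*mm*v*(K^2*v)*(T*v)) by ring.
    assert (0 <= 4*mm*v) by nra.
    assert (0 <= K^2 * v) by nra.
    assert (4*mm*v*(K^2*v)*(T*v) <= 4*mm*v*(K^2*v)*1) by (apply Rmult_le_compat_l; nra).
    assert (4*mm*v*(K^2*v) <= 4*mm*v*1) by (apply Rmult_le_compat_l; nra).
    assert (4*mm*v*1 <= 4*mm*v*K^2) by (apply Rmult_le_compat_l; nra).
    nra. }
  nra.
Qed.

Lemma bnd_dbb (c mm r K s a sg : R) : 0 <= c -> 0 < mm -> 0 < r -> r^2 = mm -> 1 <= K^2 ->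
  a = K^2 + s^2 -> 0 < sg -> sg^2 = c/mm + 2*K^2/a + a/mm ->
  Rabs ((K^2*(K^2 - s^2)/(2*a^2) * sg - /4 * /a * (-2*K*s) *
        ((-2*K^2/a^2 + /mm) * (-2*K*s) / (2*sg))) / sg^2) <= r * (K^2/a).
Proof.
  intros Hc Hm Hr Hr2 HK Ha Hsg Hsg2.
  assert (Hs : 0 <= s^2) by apply pow2_ge_0.
  assert (Hap : 0 < a) by lra.
  assert (Heq : (K^2*(K^2 - s^2)/(2*a^2) * sg - /4 * /a * (-2*K*s) *
        ((-2*K^2/a^2 + /mm) * (-2*K*s) / (2*sg))) / sg^2 =
     (K^2*(K^2 - s^2)*(/a)^2/2) * /sg - (K^2*s^2*(/a)*(-2*K^2*(/a)^2 + /mm)) * (/sg)^3 / 2).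
  { field. lra. }
  rewrite Heq. clear Heq.
  set (v := /a). set (w := /sg). set (im := /mm).
  assert (Hv : 0 < v) by (apply Rinv_0_lt_compat; lra).
  assert (Hw : 0 < w) by (apply Rinv_0_lt_compat; lra).
  assert (Him : 0 < im) by (apply Rinv_0_lt_compat; lra).
  assert (Hav : a * v = 1) by (unfold v; field; lra).
  assert (Hsw : sg * w = 1) by (unfold w; field; lra).
  assert (Hmi : mm * im = 1) by (unfold im; field; lra).
  set (X1 := K^2*(K^2 - s^2)*v^2/2).
  set (X2 := K^2*s^2*v*(-2*K^2*v^2 + im)).
  assert (HX1 : Rabs X1 <= K^2 * v / 2).
  { unfold X1. assert (Rabs (K^2 - s^2) <= a) by (apply Rabs_le; nra).
    replace (K^2*(K^2 - s^2)*v^2/2) with ((K^2*v^2/2) * (K^2 - s^2)) by (unfold Rdiv; ring).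
    rewrite Rabs_mult, Rabs_pos_eq by nra.
    assert (K^2*v^2/2 * Rabs (K^2 - s^2) <= K^2*v^2/2 * a) by (apply Rmult_le_compat_l; nra).
    assert (K^2*v^2/2 * a = K^2 * v / 2 * (a*v)) by (unfold Rdiv; ring). rewrite Hav in *. lra. }
  assert (HX2 : Rabs X2 <= K^2 * v * sg^2).
  { unfold X2. rewrite Rabs_mult, (Rabs_pos_eq (K^2*s^2*v)) by (apply Rmult_le_pos; [apply Rmult_le_pos|]; lra).
    assert (Rabs (-2*K^2*v^2 + im) <= 2*K^2*v^2 + im).
    { apply Rabs_le; nra. }
    assert (K^2*s^2*v * Rabs (-2*K^2*v^2 + im) <= K^2*s^2*v * (2*K^2*v^2 + im))
      by (apply Rmult_le_compat_l; nra).
    assert (Hs2 : s^2 * v <= 1) by (rewrite <- Hav; apply Rmult_le_compat_r; lra).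
    assert (Hsg' : sg^2 = c*im + 2*K^2*v + a*im) by (rewrite Hsg2; unfold v, im; field; lra).
    assert (0 <= c * im) by nra.
    assert (K^2*s^2*v * (2*K^2*v^2 + im) = K^2 * v * ((s^2*v) * (2*K^2*v) + s^2*im)) by ring.
    assert ((s^2*v) * (2*K^2*v) <= 2*K^2*v) by (assert (0 <= 2*K^2*v) by nra; nra).
    assert (s^2*im <= a*im) by (apply Rmult_le_compat_r; lra).
    assert (0 <= K^2 * v) by nra.
    assert (K^2 * v * ((s^2*v) * (2*K^2*v) + s^2*im) <= K^2 * v * sg^2)
      by (apply Rmult_le_compat_l; lra).
    lra. }
  assert (Hwr : w <= r).
  { assert (1 <= mm * sg^2).
    { rewrite Hsg2. assert (mm*(c/mm + 2*K^2/a + a/mm) = c + 2*K^2*mm*v + a) by (unfold v; field; lra).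
      rewrite H. assert (0 <= 2*K^2*mm*v) by (apply Rmult_le_pos; [apply Rmult_le_pos; [apply Rmult_le_pos|]|]; lra). lra. }
    rewrite <- Hr2 in H.
    assert (1 <= r*sg).
    { destruct (Rle_or_lt 1 (r*sg)) as [|Hlt]; auto.
      assert (0 < r*sg) by nra. assert ((r*sg)*(r*sg) < 1*1) by (apply Rmult_le_0_lt_compat; lra).
      nra. }
    assert (r = r*sg*w) by (rewrite Rmult_assoc, Hsw; ring).
    assert (1*w <= r*sg*w) by (apply Rmult_le_compat_r; lra). lra. }
  assert (Htri : Rabs (X1 * w - X2 * w^3/2) <= Rabs X1 * w + Rabs X2 * w^3/2).
  { unfold Rminus. eapply Rle_trans. apply Rabs_triang.
    rewrite Rabs_Ropp, Rabs_mult, Rabs_pos_eq with (x:=w) by lra.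
    replace (X2 * w^3/2) with (X2 * (w^3/2)) by field.
    rewrite Rabs_mult, (Rabs_pos_eq (w^3/2)) by (apply Rmult_le_pos; [apply pow_le|]; lra). lra. }
  assert (Rabs X1 * w <= K^2*v/2 * w) by (apply Rmult_le_compat_r; lra).
  assert (Rabs X2 * w^3/2 <= K^2*v*sg^2 * w^3/2).
  { assert (0 <= w^3/2) by (apply Rmult_le_pos; [apply pow_le|]; lra).
    replace (Rabs X2 * w^3/2) with (Rabs X2 * (w^3/2)) by field.
    replace (K^2*v*sg^2 * w^3/2) with (K^2*v*sg^2 * (w^3/2)) by field.
    apply Rmult_le_compat_r; lra. }
  assert (K^2*v*sg^2 * w^3/2 = K^2*v*w/2 * (sg*w)^2) by (unfold Rdiv; ring).
  rewrite Hsw in H1.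
  assert (K^2/a = K^2 * v) by (unfold v; field; lra). rewrite H2.
  assert (0 <= K^2 * v) by nra.
  assert (K^2 * v * w <= K^2 * v * r) by (apply Rmult_le_compat_l; lra).
  nra.
Qed.

Lemma Z_bound (aa cc x1 y1 x2 y2 : R) : 0 < aa -> aa * cc = 1 ->
  2 * Rabs (x1*x2 + y1*y2) <= aa*(x1^2+y1^2) + cc*(x2^2+y2^2).
Proof.
  intros Ha Hac.
  assert (Hc : cc = /aa) by (apply (Rmult_eq_reg_l aa); [rewrite Hac; field; lra | lra]).
  assert (H1 : 0 <= aa*(aa*x1 - x2)^2 * cc * cc) by (assert (0 < cc) by (rewrite Hc; apply Rinv_0_lt_compat; lra);
     assert (0 <= (aa*x1 - x2)^2) by apply pow2_ge_0; apply Rmult_le_pos; [apply Rmult_le_pos; [apply Rmult_le_pos|]|]; lra).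
  assert (H2 : 0 <= aa*(aa*y1 - y2)^2 * cc * cc) by (assert (0 < cc) by (rewrite Hc; apply Rinv_0_lt_compat; lra);
     assert (0 <= (aa*y1 - y2)^2) by apply pow2_ge_0; apply Rmult_le_pos; [apply Rmult_le_pos; [apply Rmult_le_pos|]|]; lra).
  assert (H3 : 0 <= aa*(aa*x1 + x2)^2 * cc * cc) by (assert (0 < cc) by (rewrite Hc; apply Rinv_0_lt_compat; lra);
     assert (0 <= (aa*x1 + x2)^2) by apply pow2_ge_0; apply Rmult_le_pos; [apply Rmult_le_pos; [apply Rmult_le_pos|]|]; lra).
  assert (H4 : 0 <= aa*(aa*y1 + y2)^2 * cc * cc) by (assert (0 < cc) by (rewrite Hc; apply Rinv_0_lt_compat; lra);
     assert (0 <= (aa*y1 + y2)^2) by apply pow2_ge_0; apply Rmult_le_pos; [apply Rmult_le_pos; [apply Rmult_le_pos|]|]; lra).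
  assert (E1 : aa*(aa*x1 - x2)^2 * cc * cc = aa*x1^2 - 2*x1*x2 + cc*x2^2).
  { replace (aa*(aa*x1 - x2)^2 * cc * cc) with ((aa*cc)*(aa*cc)*aa*x1^2 - 2*(aa*cc)*(aa*cc)*x1*x2 + (aa*cc)*cc*x2^2) by ring.
    rewrite Hac. ring. }
  assert (E2 : aa*(aa*y1 - y2)^2 * cc * cc = aa*y1^2 - 2*y1*y2 + cc*y2^2).
  { replace (aa*(aa*y1 - y2)^2 * cc * cc) with ((aa*cc)*(aa*cc)*aa*y1^2 - 2*(aa*cc)*(aa*cc)*y1*y2 + (aa*cc)*cc*y2^2) by ring.
    rewrite Hac. ring. }
  assert (E3 : aa*(aa*x1 + x2)^2 * cc * cc = aa*x1^2 + 2*x1*x2 + cc*x2^2).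
  { replace (aa*(aa*x1 + x2)^2 * cc * cc) with ((aa*cc)*(aa*cc)*aa*x1^2 + 2*(aa*cc)*(aa*cc)*x1*x2 + (aa*cc)*cc*x2^2) by ring.
    rewrite Hac. ring. }
  assert (E4 : aa*(aa*y1 + y2)^2 * cc * cc = aa*y1^2 + 2*y1*y2 + cc*y2^2).
  { replace (aa*(aa*y1 + y2)^2 * cc * cc) with ((aa*cc)*(aa*cc)*aa*y1^2 + 2*(aa*cc)*(aa*cc)*y1*y2 + (aa*cc)*cc*y2^2) by ring.
    rewrite Hac. ring. }
  unfold Rabs; destruct Rcase_abs; lra.
Qed.

Lemma energy_ineq (aa bb cc daa dbb dcc x1 y1 x2 y2 q k1 k2 : R) :
  0 < aa -> aa*cc = 1 -> Rabs bb <= 1/2 -> Rabs daa <= k1*q*aa -> Rabs dcc <= k1*q*cc ->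
  Rabs dbb <= k2*q -> 0 <= q -> 0 <= k1 -> 0 <= k2 ->
  (aa*(x1^2+y1^2) + cc*(x2^2+y2^2)) / 2 <= aa*(x1^2+y1^2) + 2*bb*(x1*x2+y1*y2) + cc*(x2^2+y2^2) /\
  aa*(x1^2+y1^2) + 2*bb*(x1*x2+y1*y2) + cc*(x2^2+y2^2) <= 3 * (aa*(x1^2+y1^2) + cc*(x2^2+y2^2)) / 2 /\
  Rabs (daa*(x1^2+y1^2) + 2*dbb*(x1*x2+y1*y2) + dcc*(x2^2+y2^2)) <=
    2*(k1+k2)*q*(aa*(x1^2+y1^2) + 2*bb*(x1*x2+y1*y2) + cc*(x2^2+y2^2)).
Proof.
  intros Ha Hac Hb Hda Hdc Hdb Hq Hk1 Hk2.
  pose proof (Z_bound aa cc x1 y1 x2 y2 Ha Hac) as HZ.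
  set (X := x1^2+y1^2) in *. set (Y := x2^2+y2^2) in *. set (Z := x1*x2+y1*y2) in *.
  assert (HX : 0 <= X) by (unfold X; pose proof (pow2_ge_0 x1); pose proof (pow2_ge_0 y1); lra).
  assert (HY : 0 <= Y) by (unfold Y; pose proof (pow2_ge_0 x2); pose proof (pow2_ge_0 y2); lra).
  assert (Hcc : 0 < cc) by (destruct (Rle_or_lt cc 0); [nra|auto]).
  set (S := aa*X + cc*Y) in *.
  assert (HbZ : Rabs (2*bb*Z) <= S/2).
  { rewrite Rabs_mult, Rabs_mult, (Rabs_pos_eq 2) by lra.
    assert (Rabs bb * Rabs Z <= 1/2 * Rabs Z) by (apply Rmult_le_compat_r; [apply Rabs_pos|auto]).
    lra. }
  assert (E1 : S/2 <= aa*X + 2*bb*Z + cc*Y) by (apply Rabs_le_between' in HbZ || idtac;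
     unfold S in *; pose proof (Rle_abs (-(2*bb*Z))); rewrite Rabs_Ropp in H; lra).
  split; [exact E1|]. split.
  { unfold S in *. pose proof (Rle_abs (2*bb*Z)). lra. }
  assert (T1 : Rabs (daa*X) <= k1*q*aa*X) by (rewrite Rabs_mult, (Rabs_pos_eq X) by auto; apply Rmult_le_compat_r; auto).
  assert (T2 : Rabs (dcc*Y) <= k1*q*cc*Y) by (rewrite Rabs_mult, (Rabs_pos_eq Y) by auto; apply Rmult_le_compat_r; auto).
  assert (T3 : Rabs (2*dbb*Z) <= k2*q*S).
  { rewrite Rabs_mult, Rabs_mult, (Rabs_pos_eq 2) by lra.
    assert (Rabs dbb * Rabs Z <= k2*q * Rabs Z) by (apply Rmult_le_compat_r; [apply Rabs_pos|auto]).
    assert (0 <= k2*q) by nra.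
    assert (k2*q*(2*Rabs Z) <= k2*q*S) by (apply Rmult_le_compat_l; auto). lra. }
  assert (T : Rabs (daa*X + 2*dbb*Z + dcc*Y) <= (k1+k2)*q*S).
  { eapply Rle_trans. apply Rabs_triang. eapply Rle_trans. apply Rplus_le_compat_r. apply Rabs_triang.
    unfold S in *. lra. }
  assert (0 <= (k1+k2)*q) by nra.
  assert ((k1+k2)*q*S <= (k1+k2)*q*(2*(aa*X + 2*bb*Z + cc*Y))) by (apply Rmult_le_compat_l; lra).
  lra.
Qed.

Lemma Rdiv_le_1 x a : 0 < a -> x <= a -> x / a <= 1.
Proof. intros Ha Hx. apply (Rmult_le_reg_r a); auto. unfold Rdiv. rewrite Rmult_assoc, Rinv_l by lra. lra. Qed.

Lemma bnd_bb (c mm K s a sg : R) : 0 <= c -> 0 < mm -> 1 <= K^2 -> a = K^2 + s^2 ->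
  0 < sg -> sg^2 = c/mm + 2*K^2/a + a/mm -> Rabs (/4 * /a * (-2*K*s) / sg) <= 1/2.
Proof.
  intros Hc Hm HK Ha Hsg Hsg2.
  assert (Hs : 0 <= s^2) by apply pow2_ge_0.
  assert (Hap : 0 < a) by lra.
  set (x := /4 * /a * (-2*K*s) / sg).
  assert (Hx : x^2 * sg^2 = K^2 * s^2 / (4 * a^2)) by (unfold x; field; lra).
  assert (H1 : K^2 * s^2 / (4*a^2) <= K^2/(4*a)).
  { assert (K^2 * s^2 / (4*a^2) = (K^2/(4*a)) * (s^2/a)) by (field; lra).
    assert (s^2/a <= 1) by (apply Rdiv_le_1; lra).
    assert (0 <= K^2/(4*a)) by (apply Rdiv_le_0_compat; lra).
    assert (0 <= s^2/a) by (apply Rdiv_le_0_compat; lra). nra. }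
  assert (H2 : K^2/(4*a) <= sg^2/8).
  { rewrite Hsg2. assert (0 <= c/mm) by (apply Rdiv_le_0_compat; lra).
    assert (0 <= a/mm) by (apply Rdiv_le_0_compat; lra).
    assert (K^2/(4*a) = (2*K^2/a)/8) by (field; lra). lra. }
  assert (Hx2 : x^2 <= 1/4).
  { assert (0 < sg^2) by nra.
    assert (x^2 * sg^2 <= 1/4 * sg^2) by lra.
    apply (Rmult_le_reg_r (sg^2)); auto. }
  destruct (Rle_or_lt (Rabs x) (1/2)) as [|Hgt]; auto.
  assert (Rabs x ^2 = x^2) by apply pow2_abs.
  nra.
Qed.

Lemma AA_bound (c mm K a : R) : 0 <= c -> 0 < mm -> 1 <= K^2 -> K^2 <= a ->
  1 + c/a + 2*K^2*mm/a^2 <= 1 + c + 2*mm.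
Proof.
  intros Hc Hm HK Ha.
  assert (Hap : 0 < a) by lra.
  assert (c/a <= c).
  { unfold Rdiv. assert (/a <= 1) by (rewrite <- Rinv_1; apply Rinv_le_contravar; lra). nra. }
  assert (2*K^2*mm/a^2 <= 2*mm).
  { assert (2*K^2*mm/a^2 = 2*mm * ((K^2/a) * /a)) by (field; lra).
    assert (K^2/a <= 1) by (apply Rdiv_le_1; lra).
    assert (/a <= 1) by (rewrite <- Rinv_1; apply Rinv_le_contravar; lra).
    assert (0 <= K^2/a) by (apply Rdiv_le_0_compat; lra).
    assert (0 < /a) by (apply Rinv_0_lt_compat; lra).
    assert ((K^2/a) * /a <= 1) by nra. nra. }
  lra.
Qed.

Ltac nz := repeat match goal with |- _ /\ _ => split | |- True => exact I
  | |- _ <> 0 => apply Rgt_not_eq; unfold Rgt | |- 0 < _ * _ => apply Rmult_lt_0_compat end; try lra; try nra.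

Section S.
Variables (e mm K xi : R).
Hypothesis hm : 0 < mm.
Hypothesis hK : 1 <= K^2.

Lemma al_pos t : K^2 <= alpha K xi t.
Proof. unfold alpha. pose proof (pow2_ge_0 (xi - K*t)); lra. Qed.
Lemma al_gt0 t : 0 < alpha K xi t.
Proof. generalize (al_pos t); lra. Qed.

Definition AA t := 1 + 4*PI*e^2/alpha K xi t + 2*K^2*mm/(alpha K xi t)^2.
Definition MM t := 4*PI*e^2/mm + 2*K^2/alpha K xi t + alpha K xi t/mm.
Definition dAA t := -(4*PI*e^2/(alpha K xi t)^2 + 4*K^2*mm/(alpha K xi t)^3) * dalpha K xi t.
Definition dMM t := (-2*K^2/(alpha K xi t)^2 + /mm) * dalpha K xi t.
Definition dh t := K^2*(K^2 - (xi-K*t)^2)/(2*(alpha K xi t)^2).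

Lemma AA_ge1 t : 1 <= AA t.
Proof.
  unfold AA. generalize (al_gt0 t) PI_RGT_0; intros. 
  assert (0 <= 4*PI*e^2/alpha K xi t) by (apply Rdiv_le_0_compat; nra).
  assert (0 <= 2*K^2*mm/(alpha K xi t)^2) by (apply Rdiv_le_0_compat; nra).
  lra.
Qed.

Lemma d_al t : is_derive (alpha K xi) t (dalpha K xi t).
Proof. unfold alpha, dalpha. auto_derive; auto. ring. Qed.

Lemma d_AA t : is_derive AA t (dAA t).
Proof.
  unfold AA, dAA, alpha, dalpha. generalize (al_gt0 t); unfold alpha; intros.
  auto_derive. nz. field. lra.
Qed.

Lemma d_MM t : is_derive MM t (dMM t).
Proof.
  unfold MM, dMM, alpha, dalpha. generalize (al_gt0 t); unfold alpha; intros.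
  auto_derive. nz. field. lra.
Qed.

Lemma d_h t : is_derive (h2 K xi) t (dh t).
Proof.
  unfold h2, dh, alpha, dalpha. generalize (al_gt0 t); unfold alpha; intros.
  auto_derive. nz. field. lra.
Qed.
End S.

Section T.
Variables (e mm K xi : R).
Hypothesis hm : 0 < mm.
Hypothesis hK : 1 <= K^2.

Definition aa t := sqrt (AA e mm K xi t).
Definition cc t := / sqrt (AA e mm K xi t).
Definition bb t := h2 K xi t / sqrt (MM e mm K xi t).
Definition daa t := dAA e mm K xi t / (2 * sqrt (AA e mm K xi t)).
Definition dcc t := - daa t / (sqrt (AA e mm K xi t)) ^ 2.
Definition dbb t := (dh K xi t * sqrt (MM e mm K xi t) - h2 K xi t *
    (dMM mm K xi t / (2 * sqrt (MM e mm K xi t)))) / (sqrt (MM e mm K xi t)) ^ 2.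

Lemma MM_pos t : 0 < MM e mm K xi t.
Proof.
  unfold MM. generalize (al_gt0 K xi hK t) PI_RGT_0; intros.
  assert (0 <= 4*PI*e^2/mm) by (apply Rdiv_le_0_compat; nra).
  assert (0 < 2*K^2/alpha K xi t) by (apply Rdiv_lt_0_compat; nra).
  assert (0 < alpha K xi t / mm) by (apply Rdiv_lt_0_compat; nra).
  lra.
Qed.

Lemma AA_pos t : 0 < AA e mm K xi t.
Proof. generalize (AA_ge1 e mm K xi hm hK t); lra. Qed.

Lemma d_aa t : is_derive aa t (daa t).
Proof. unfold aa, daa. apply is_derive_sqrt. apply d_AA; auto. apply AA_pos. Qed.

Lemma d_cc t : is_derive cc t (dcc t).
Proof.
  unfold cc, dcc. apply (is_derive_inv (fun y => sqrt (AA e mm K xi y))). apply d_aa.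
  apply Rgt_not_eq, sqrt_lt_R0, AA_pos.
Qed.

Lemma d_bb t : is_derive bb t (dbb t).
Proof.
  unfold bb, dbb. apply (is_derive_div (h2 K xi) (fun y => sqrt (MM e mm K xi y))). apply d_h; auto.
  apply is_derive_sqrt. apply d_MM; auto. apply MM_pos.
  apply Rgt_not_eq, sqrt_lt_R0, MM_pos.
Qed.
End T.

Section U.
Variables (e mm K xi : R).
Hypothesis hm : 0 < mm.
Hypothesis hK : 1 <= K^2.

Lemma pm_AA t : p2 e mm K xi t / m2 mm K xi t = AA e mm K xi t.
Proof.
  unfold p2, m2, AA.
  pose proof (al_gt0 K xi hK t) as Ha.
  assert (Hr : sqrt mm * sqrt mm = mm) by (apply sqrt_sqrt; lra).
  assert (Hq : sqrt (alpha K xi t) * sqrt (alpha K xi t) = alpha K xi t) by (apply sqrt_sqrt; lra).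
  assert (Hr0 : 0 < sqrt mm) by (apply sqrt_lt_R0; lra).
  assert (Hq0 : 0 < sqrt (alpha K xi t)) by (apply sqrt_lt_R0; lra).
  set (r := sqrt mm) in *. set (q := sqrt (alpha K xi t)) in *.
  rewrite <- Hr, <- Hq. field. lra.
Qed.

Lemma mp_MM t : m2 mm K xi t * p2 e mm K xi t = MM e mm K xi t.
Proof.
  unfold p2, m2, MM.
  pose proof (al_gt0 K xi hK t) as Ha.
  assert (Hr : sqrt mm * sqrt mm = mm) by (apply sqrt_sqrt; lra).
  assert (Hq : sqrt (alpha K xi t) * sqrt (alpha K xi t) = alpha K xi t) by (apply sqrt_sqrt; lra).
  assert (Hr0 : 0 < sqrt mm) by (apply sqrt_lt_R0; lra).
  assert (Hq0 : 0 < sqrt (alpha K xi t)) by (apply sqrt_lt_R0; lra).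
  set (r := sqrt mm) in *. set (q := sqrt (alpha K xi t)) in *.
  rewrite <- Hr, <- Hq. field. lra.
Qed.

Lemma m2_pos t : 0 < m2 mm K xi t.
Proof.
  unfold m2. pose proof (al_gt0 K xi hK t).
  apply Rmult_lt_0_compat. apply Rinv_0_lt_compat, sqrt_lt_R0; lra. apply sqrt_lt_R0; lra.
Qed.

Lemma p2_pos t : 0 < p2 e mm K xi t.
Proof.
  pose proof (m2_pos t). pose proof (AA_pos e mm K xi hm hK t).
  rewrite <- (pm_AA t) in H0.
  replace (p2 e mm K xi t) with (p2 e mm K xi t / m2 mm K xi t * m2 mm K xi t) by (field; lra).
  apply Rmult_lt_0_compat; lra.
Qed.

Lemma p_eq t : p2 e mm K xi t = aa e mm K xi t * sqrt (MM e mm K xi t).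
Proof.
  unfold aa. rewrite <- sqrt_mult by (generalize (AA_pos e mm K xi hm hK t) (MM_pos e mm K xi hm hK t); lra).
  rewrite <- (pm_AA t), <- (mp_MM t).
  pose proof (m2_pos t). pose proof (p2_pos t).
  replace (p2 e mm K xi t / m2 mm K xi t * (m2 mm K xi t * p2 e mm K xi t)) with (p2 e mm K xi t ^2)
    by (field; lra).
  rewrite sqrt_pow2; lra.
Qed.

Lemma m_eq t : m2 mm K xi t = cc e mm K xi t * p2 e mm K xi t / aa e mm K xi t.
Proof.
  pose proof (m2_pos t). pose proof (p2_pos t).
  unfold cc, aa.
  assert (Hs : sqrt (AA e mm K xi t) * sqrt (AA e mm K xi t) = AA e mm K xi t)
    by (apply sqrt_sqrt; generalize (AA_pos e mm K xi hm hK t); lra).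
  assert (0 < sqrt (AA e mm K xi t)) by (apply sqrt_lt_R0, AA_pos; auto).
  replace (/ sqrt (AA e mm K xi t) * p2 e mm K xi t / sqrt (AA e mm K xi t))
    with (p2 e mm K xi t / (sqrt (AA e mm K xi t) * sqrt (AA e mm K xi t))) by (field; lra).
  rewrite Hs, <- pm_AA. field. lra.
Qed.

Lemma h_eq t : h2 K xi t = bb e mm K xi t * p2 e mm K xi t / aa e mm K xi t.
Proof.
  rewrite p_eq. unfold bb.
  assert (0 < sqrt (AA e mm K xi t)) by (apply sqrt_lt_R0, AA_pos; auto).
  assert (0 < sqrt (MM e mm K xi t)) by (apply sqrt_lt_R0, MM_pos; auto).
  unfold aa. field. lra.
Qed.

Lemma coef1 t : sqrt (p2 e mm K xi t / m2 mm K xi t) = aa e mm K xi t.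
Proof. rewrite pm_AA. reflexivity. Qed.

Lemma coef3 t : sqrt (m2 mm K xi t / p2 e mm K xi t) = cc e mm K xi t.
Proof.
  pose proof (m2_pos t). pose proof (p2_pos t).
  replace (m2 mm K xi t / p2 e mm K xi t) with (/ (p2 e mm K xi t / m2 mm K xi t)) by (field; lra).
  rewrite pm_AA. unfold cc. apply sqrt_inv.
Qed.

Lemma coef2 t : h2 K xi t / sqrt (m2 mm K xi t * p2 e mm K xi t) = bb e mm K xi t.
Proof. rewrite mp_MM. reflexivity. Qed.
End U.

Section V.
Variables (e mm K xi : R).
Hypothesis hm : 0 < mm.
Hypothesis hK : 1 <= K^2.

Let c := 4*PI*e^2.
Lemma c_nn : 0 <= c.
Proof. unfold c. pose proof PI_RGT_0. pose proof (pow2_ge_0 e). nra. Qed.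

Lemma al_eq t : alpha K xi t = K^2 + (xi - K*t)^2.
Proof. reflexivity. Qed.

Lemma aa_ge1 t : 1 <= aa e mm K xi t.
Proof.
  unfold aa. rewrite <- sqrt_1. apply sqrt_le_1_alt. apply AA_ge1; auto.
Qed.

Lemma aa_le t : aa e mm K xi t <= 1 + c + 2*mm.
Proof.
  unfold aa. pose proof (AA_ge1 e mm K xi hm hK t).
  assert (sqrt (AA e mm K xi t) <= AA e mm K xi t).
  { pose proof (sqrt_pos (AA e mm K xi t)).
    assert (Hs : sqrt (AA e mm K xi t) * sqrt (AA e mm K xi t) = AA e mm K xi t) by (apply sqrt_sqrt; lra).
    assert (1 <= sqrt (AA e mm K xi t)) by (rewrite <- sqrt_1; apply sqrt_le_1_alt; lra).
    nra. }
  assert (AA e mm K xi t <= 1 + c + 2*mm).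
  { unfold AA. apply AA_bound; auto. apply c_nn. apply al_pos. }
  lra.
Qed.

Lemma acc t : aa e mm K xi t * cc e mm K xi t = 1.
Proof. unfold aa, cc. pose proof (aa_ge1 t). unfold aa in H. field. lra. Qed.

Lemma daa_bnd t : Rabs (daa e mm K xi t) <= (c + 4*mm)/2 * (K^2/alpha K xi t) * aa e mm K xi t.
Proof.
  pose proof (aa_ge1 t).
  assert (HA : Rabs (dAA e mm K xi t) <= (c + 4*mm) * (K^2/alpha K xi t)).
  { unfold dAA, dalpha. apply bnd_dAA; auto. apply c_nn. lra. }
  unfold daa. fold (aa e mm K xi t).
  unfold Rdiv. rewrite Rabs_mult. rewrite (Rabs_pos_eq (/ (2 * aa e mm K xi t))) by (apply Rlt_le, Rinv_0_lt_compat; lra).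
  assert (0 <= K^2/alpha K xi t) by (apply Rdiv_le_0_compat; [lra| apply al_gt0; auto]).
  pose proof c_nn.
  assert (0 <= (c+4*mm) * (K^2/alpha K xi t)) by nra.
  assert (/(2*aa e mm K xi t) <= /2) by (apply Rinv_le_contravar; lra).
  assert (0 < /(2*aa e mm K xi t)) by (apply Rinv_0_lt_compat; lra).
  assert (Rabs (dAA e mm K xi t) * /(2*aa e mm K xi t) <= (c+4*mm) * (K^2/alpha K xi t) * /2).
  { apply Rmult_le_compat; auto. apply Rabs_pos. lra. }
  assert ((c+4*mm) * (K^2/alpha K xi t) * /2 <= (c+4*mm)/2 * (K^2/alpha K xi t) * 1) by (unfold Rdiv; nra).
  assert ((c+4*mm)/2 * (K^2/alpha K xi t) * 1 <= (c+4*mm)/2 * (K^2/alpha K xi t) * aa e mm K xi t)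
    by (apply Rmult_le_compat_l; [unfold Rdiv; nra| lra]).
  lra.
Qed.

Lemma dcc_bnd t : Rabs (dcc e mm K xi t) <= (c + 4*mm)/2 * (K^2/alpha K xi t) * cc e mm K xi t.
Proof.
  pose proof (aa_ge1 t). pose proof (daa_bnd t). pose proof (acc t).
  unfold dcc. fold (aa e mm K xi t).
  assert (cc e mm K xi t = / aa e mm K xi t) by (apply (Rmult_eq_reg_l (aa e mm K xi t)); [rewrite H1; field|]; lra).
  rewrite H2.
  replace (- daa e mm K xi t / aa e mm K xi t ^ 2) with (- daa e mm K xi t * (/ aa e mm K xi t) * (/ aa e mm K xi t)) by (field; lra).
  rewrite Rabs_mult, Rabs_mult, Rabs_Ropp, Rabs_pos_eq with (x := / aa e mm K xi t) by (apply Rlt_le, Rinv_0_lt_compat; lra).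
  assert (0 < / aa e mm K xi t) by (apply Rinv_0_lt_compat; lra).
  assert (Rabs (daa e mm K xi t) * / aa e mm K xi t <= (c + 4*mm)/2 * (K^2/alpha K xi t) * aa e mm K xi t * / aa e mm K xi t)
    by (apply Rmult_le_compat_r; lra).
  replace ((c + 4*mm)/2 * (K^2/alpha K xi t) * aa e mm K xi t * / aa e mm K xi t) with ((c + 4*mm)/2 * (K^2/alpha K xi t)) in H4 by (field; split; [lra|]; apply Rgt_not_eq, al_gt0; auto).
  apply Rmult_le_compat_r; lra.
Qed.

Lemma dbb_bnd t : Rabs (dbb e mm K xi t) <= sqrt mm * (K^2/alpha K xi t).
Proof.
  unfold dbb, dh, h2, dMM, dalpha.
  apply (bnd_dbb c mm (sqrt mm) K (xi - K*t)); auto.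
  - apply c_nn.
  - apply sqrt_lt_R0; lra.
  - rewrite <- Rsqr_pow2. apply Rsqr_sqrt. lra.
  - apply sqrt_lt_R0, MM_pos; auto.
  - rewrite <- Rsqr_pow2. rewrite Rsqr_sqrt. reflexivity. generalize (MM_pos e mm K xi hm hK t); lra.
Qed.

Lemma bb_bnd t : Rabs (bb e mm K xi t) <= 1/2.
Proof.
  unfold bb, h2, dalpha.
  apply (bnd_bb c mm K (xi - K*t)); auto.
  - apply c_nn.
  - apply sqrt_lt_R0, MM_pos; auto.
  - rewrite <- Rsqr_pow2. rewrite Rsqr_sqrt. reflexivity. generalize (MM_pos e mm K xi hm hK t); lra.
Qed.

Lemma d_G (D t : R) : is_derive (fun s => D * atan (s - xi/K)) t (D * (K^2/alpha K xi t)).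
Proof.
  assert (HK0 : K <> 0) by (intro; subst; lra).
  pose proof (al_gt0 K xi hK t).
  auto_derive. auto. unfold alpha in *.
  replace (1 + (t - xi/K)*(t - xi/K)) with ((K^2 + (xi - K*t)^2)/K^2) by (field; auto).
  field. split; lra.
Qed.
End V.

Lemma Re_ode1 (a b : R) (z w : C) : Re (- (RtoC a * z) - RtoC b * w)%C = - a * Re z - b * Re w.
Proof. destruct z, w. simpl. ring. Qed.
Lemma Im_ode1 (a b : R) (z w : C) : Im (- (RtoC a * z) - RtoC b * w)%C = - a * Im z - b * Im w.
Proof. destruct z, w. simpl. ring. Qed.
Lemma Re_ode2 (a b : R) (z w : C) : Re (RtoC a * z + RtoC b * w)%C = a * Re z + b * Re w.
Proof. destruct z, w. simpl. ring. Qed.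
Lemma Im_ode2 (a b : R) (z w : C) : Im (RtoC a * z + RtoC b * w)%C = a * Im z + b * Im w.
Proof. destruct z, w. simpl. ring. Qed.
Lemma Cmod2 (z : C) : Cmod z ^ 2 = Re z ^ 2 + Im z ^ 2.
Proof.
  unfold Cmod. rewrite <- Rsqr_pow2, Rsqr_sqrt. reflexivity.
  pose proof (pow2_ge_0 (fst z)); pose proof (pow2_ge_0 (snd z)); lra.
Qed.
Lemma Re_conj (z w : C) : Re (z * Cconj w)%C = Re z * Re w + Im z * Im w.
Proof. destruct z, w. simpl. ring. Qed.

Lemma K2 (k : Z) : k <> 0%Z -> 1 <= IZR k ^ 2.
Proof.
  intros hk. destruct (Z_lt_le_dec k 0).
  - assert (IZR k <= -1) by (apply IZR_le; lia). nra.
  - assert (1 <= IZR k) by (apply IZR_le; lia). nra.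
Qed.

Section W.
Variables (e mm K xi : R) (B1 B2 : R -> C).
Hypothesis hm : 0 < mm.
Hypothesis hK : 1 <= K^2.
Hypothesis sol : is_solution e mm K xi B1 B2.

Let D := 2*((4*PI*e^2 + 4*mm)/2 + sqrt mm).
Let G := fun s => D * atan (s - xi/K).
Let En := fun s => aa e mm K xi s * (Re (B1 s) ^ 2 + Im (B1 s) ^ 2)
   + 2 * bb e mm K xi s * (Re (B1 s) * Re (B2 s) + Im (B1 s) * Im (B2 s))
   + cc e mm K xi s * (Re (B2 s) ^ 2 + Im (B2 s) ^ 2).
Let dEn := fun s => daa e mm K xi s * (Re (B1 s) ^ 2 + Im (B1 s) ^ 2)
   + 2 * dbb e mm K xi s * (Re (B1 s) * Re (B2 s) + Im (B1 s) * Im (B2 s))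
   + dcc e mm K xi s * (Re (B2 s) ^ 2 + Im (B2 s) ^ 2).

Lemma HE s : Eminus e mm K xi B1 B2 s = En s.
Proof.
  unfold Eminus, En. cbv zeta.
  rewrite coef1, coef2, coef3 by auto. rewrite !Cmod2, Re_conj. reflexivity.
Qed.

Lemma HD (sg s : R) : 0 < s ->
  is_derive (fun u => (aa e mm K xi u * (Re (B1 u) ^ 2 + Im (B1 u) ^ 2)
   + 2 * bb e mm K xi u * (Re (B1 u) * Re (B2 u) + Im (B1 u) * Im (B2 u))
   + cc e mm K xi u * (Re (B2 u) ^ 2 + Im (B2 u) ^ 2)) * exp (sg * G u)) s
   (exp (sg * G s) * (dEn s + sg * (D * (K^2/alpha K xi s)) * En s)).
Proof.
  intros Hs. destruct sol as [_ Hd]. destruct (Hd s Hs) as [H1 H2].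
  pose proof (Re_derive _ _ _ H1) as R1. rewrite Re_ode1 in R1.
  pose proof (Im_derive _ _ _ H1) as I1. rewrite Im_ode1 in I1.
  pose proof (Re_derive _ _ _ H2) as R2. rewrite Re_ode2 in R2.
  pose proof (Im_derive _ _ _ H2) as I2. rewrite Im_ode2 in I2.
  unfold dEn, En.
  apply (core (aa e mm K xi) (bb e mm K xi) (cc e mm K xi) G (fun u => Re (B1 u)) (fun u => Im (B1 u))
     (fun u => Re (B2 u)) (fun u => Im (B2 u)) _ _ _ _ (h2 K xi s) (m2 mm K xi s) (p2 e mm K xi s)).
  - apply d_aa; auto.
  - apply d_bb; auto.
  - apply d_cc; auto.
  - apply d_G; auto.
  - exact R1.
  - exact I1.
  - exact R2.
  - exact I2.
  - pose proof (aa_ge1 e mm K xi hm hK s). lra.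
  - apply h_eq; auto.
  - apply m_eq; auto.
Qed.

Lemma dE_bound s :
  (aa e mm K xi s * (Re (B1 s) ^ 2 + Im (B1 s) ^ 2) + cc e mm K xi s * (Re (B2 s) ^ 2 + Im (B2 s) ^ 2)) / 2 <= En s /\
  En s <= 3 * (aa e mm K xi s * (Re (B1 s) ^ 2 + Im (B1 s) ^ 2) + cc e mm K xi s * (Re (B2 s) ^ 2 + Im (B2 s) ^ 2)) / 2 /\
  Rabs (dEn s) <= D * (K^2/alpha K xi s) * En s.
Proof.
  unfold En, dEn, D.
  pose proof (al_gt0 K xi hK s).
  apply energy_ineq.
  - pose proof (aa_ge1 e mm K xi hm hK s). lra.
  - apply acc; auto.
  - apply bb_bnd; auto.
  - apply daa_bnd; auto.
  - apply dcc_bnd; auto.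
  - apply dbb_bnd; auto.
  - apply Rdiv_le_0_compat; lra.
  - pose proof PI_RGT_0. pose proof (pow2_ge_0 e).
    assert (0 <= 4*PI*e^2) by (apply Rmult_le_pos; lra). lra.
  - apply sqrt_pos.
Qed.

Lemma RC_gen sg : RC (fun u => (aa e mm K xi u * (Re (B1 u) ^ 2 + Im (B1 u) ^ 2)
   + 2 * bb e mm K xi u * (Re (B1 u) * Re (B2 u) + Im (B1 u) * Im (B2 u))
   + cc e mm K xi u * (Re (B2 u) ^ 2 + Im (B2 u) ^ 2)) * exp (sg * G u)).
Proof.
  destruct sol as [Hc _]. destruct (Hc 0 (Rle_refl 0)) as [C1 C2].
  apply (RC_form (aa e mm K xi) (bb e mm K xi) (cc e mm K xi) (fun u => exp (sg * G u))
     (fun u => Re (B1 u)) (fun u => Im (B1 u)) (fun u => Re (B2 u)) (fun u => Im (B2 u))).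
  - apply RC_cont. apply (ex_derive_continuous (K:=R_AbsRing) (V:=R_NormedModule)). eexists. apply d_aa; auto.
  - apply RC_cont. apply (ex_derive_continuous (K:=R_AbsRing) (V:=R_NormedModule)). eexists. apply d_bb; auto.
  - apply RC_cont. apply (ex_derive_continuous (K:=R_AbsRing) (V:=R_NormedModule)). eexists. apply d_cc; auto.
  - apply RC_cont. apply (ex_derive_continuous (K:=R_AbsRing) (V:=R_NormedModule)).
    unfold G. auto_derive. assert (K <> 0) by (intro; subst; lra). auto.
  - apply Re_RC; auto.
  - apply Im_RC; auto.
  - apply Re_RC; auto.
  - apply Im_RC; auto.
Qed.

Lemma E_upper t : 0 <= t -> En t * exp (-1 * G t) <= En 0 * exp (-1 * G 0).
Proof.
  intros Ht.
  apply (mono (fun u => En u * exp (-1 * G u))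
     (fun u => exp (-1 * G u) * (dEn u + -1 * (D * (K^2/alpha K xi u)) * En u))); auto.
  - apply RC_gen.
  - intros s Hs. apply HD; auto.
  - intros s Hs. destruct (dE_bound s) as [_ [_ H]].
    pose proof (Rle_abs (dEn s)). pose proof (exp_pos (-1 * G s)).
    assert (dEn s + -1 * (D * (K^2/alpha K xi s)) * En s <= 0) by lra.
    nra.
Qed.

Lemma E_lower t : 0 <= t -> En 0 * exp (1 * G 0) <= En t * exp (1 * G t).
Proof.
  intros Ht.
  apply (mono_inc (fun u => En u * exp (1 * G u))
     (fun u => exp (1 * G u) * (dEn u + 1 * (D * (K^2/alpha K xi u)) * En u))); auto.
  - apply RC_gen.
  - intros s Hs. apply HD; auto.
  - intros s Hs. destruct (dE_bound s) as [_ [_ H]].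
    pose proof (Rle_abs (- dEn s)). rewrite Rabs_Ropp in H0. pose proof (exp_pos (1 * G s)).
    assert (0 <= dEn s + 1 * (D * (K^2/alpha K xi s)) * En s) by lra.
    nra.
Qed.

Lemma exp_le' x y : x <= y -> exp x <= exp y.
Proof. intros H. destruct (Rle_lt_or_eq_dec _ _ H). apply Rlt_le, exp_increasing; auto. subst; lra. Qed.

Lemma D_nn : 0 <= D.
Proof.
  unfold D. pose proof PI_RGT_0. pose proof (pow2_ge_0 e). pose proof (sqrt_pos mm).
  assert (0 <= 4*PI*e^2) by (apply Rmult_le_pos; lra). lra.
Qed.

Lemma G_diff t : G t - G 0 <= D * PI /\ - (D * PI) <= G t - G 0.
Proof.
  unfold G. pose proof D_nn. pose proof (atan_bound (t - xi/K)). pose proof (atan_bound (0 - xi/K)).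
  assert (atan (t - xi / K) - atan (0 - xi/K) <= PI) by lra.
  assert (- PI <= atan (t - xi / K) - atan (0 - xi/K)) by lra.
  split; nra.
Qed.

Lemma En_upper t : 0 <= t -> En t <= exp (D*PI) * En 0.
Proof.
  intros Ht. pose proof (E_upper t Ht). destruct (G_diff t).
  destruct (dE_bound 0) as [H2 _].
  assert (0 <= En 0).
  { eapply Rle_trans; [|exact H2].
    pose proof (aa_ge1 e mm K xi hm hK 0). pose proof (acc e mm K xi hm hK 0).
    assert (0 < cc e mm K xi 0) by (destruct (Rle_or_lt (cc e mm K xi 0) 0); [nra|auto]).
    pose proof (pow2_ge_0 (Re (B1 0))); pose proof (pow2_ge_0 (Im (B1 0)));
    pose proof (pow2_ge_0 (Re (B2 0))); pose proof (pow2_ge_0 (Im (B2 0))). nra. }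
  assert (En t = En t * exp (-1 * G t) * exp (G t)).
  { rewrite Rmult_assoc, <- exp_plus. replace (-1 * G t + G t) with 0 by ring. rewrite exp_0. ring. }
  rewrite H4.
  assert (En t * exp (-1 * G t) * exp (G t) <= En 0 * exp (-1 * G 0) * exp (G t))
    by (apply Rmult_le_compat_r; [apply Rlt_le, exp_pos|auto]).
  rewrite (Rmult_assoc (En 0)), <- exp_plus in H5.
  assert (exp (-1 * G 0 + G t) <= exp (D*PI)) by (apply exp_le'; lra).
  assert (En 0 * exp (-1 * G 0 + G t) <= En 0 * exp (D*PI)) by (apply Rmult_le_compat_l; auto).
  lra.
Qed.

Lemma En_lower t : 0 <= t -> En 0 <= exp (D*PI) * En t.
Proof.
  intros Ht. pose proof (E_lower t Ht). destruct (G_diff t).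
  destruct (dE_bound t) as [H2 _].
  assert (0 <= En t).
  { eapply Rle_trans; [|exact H2].
    pose proof (aa_ge1 e mm K xi hm hK t). pose proof (acc e mm K xi hm hK t).
    assert (0 < cc e mm K xi t) by (destruct (Rle_or_lt (cc e mm K xi t) 0); [nra|auto]).
    pose proof (pow2_ge_0 (Re (B1 t))); pose proof (pow2_ge_0 (Im (B1 t)));
    pose proof (pow2_ge_0 (Re (B2 t))); pose proof (pow2_ge_0 (Im (B2 t))). nra. }
  assert (En 0 = En 0 * exp (1 * G 0) * exp (- G 0)).
  { rewrite Rmult_assoc, <- exp_plus. replace (1 * G 0 + - G 0) with 0 by ring. rewrite exp_0. ring. }
  rewrite H4.
  assert (En 0 * exp (1 * G 0) * exp (- G 0) <= En t * exp (1 * G t) * exp (- G 0))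
    by (apply Rmult_le_compat_r; [apply Rlt_le, exp_pos|auto]).
  rewrite (Rmult_assoc (En t)), <- exp_plus in H5.
  assert (exp (1 * G t + - G 0) <= exp (D*PI)) by (apply exp_le'; lra).
  assert (En t * exp (1 * G t + - G 0) <= En t * exp (D*PI)) by (apply Rmult_le_compat_l; auto).
  lra.
Qed.

Let L := 1 + 4*PI*e^2 + 2*mm.
Let Cc := exp (D*PI).
Let N := fun s => Re (B1 s) ^ 2 + Im (B1 s) ^ 2 + (Re (B2 s) ^ 2 + Im (B2 s) ^ 2).
Let S := fun s => aa e mm K xi s * (Re (B1 s) ^ 2 + Im (B1 s) ^ 2) + cc e mm K xi s * (Re (B2 s) ^ 2 + Im (B2 s) ^ 2).

Lemma N_S s : 0 <= N s /\ N s <= L * S s /\ S s <= L * N s.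
Proof.
  unfold N, S, L.
  pose proof (aa_ge1 e mm K xi hm hK s). pose proof (aa_le e mm K xi hm hK s).
  pose proof (acc e mm K xi hm hK s).
  set (a := aa e mm K xi s) in *. set (c := cc e mm K xi s) in *.
  set (X := Re (B1 s) ^ 2 + Im (B1 s) ^ 2). set (Y := Re (B2 s) ^ 2 + Im (B2 s) ^ 2).
  assert (HX : 0 <= X) by (unfold X; pose proof (pow2_ge_0 (Re (B1 s))); pose proof (pow2_ge_0 (Im (B1 s))); lra).
  assert (HY : 0 <= Y) by (unfold Y; pose proof (pow2_ge_0 (Re (B2 s))); pose proof (pow2_ge_0 (Im (B2 s))); lra).
  set (l := 1 + 4 * PI * e ^ 2 + 2 * mm) in *.
  assert (Hc : 0 < c) by (destruct (Rle_or_lt c 0); [nra|auto]).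
  assert (Hc1 : c <= 1) by nra.
  assert (Hlc : 1 <= l * c) by nra.
  assert (Hl : 1 <= l) by lra.
  split; [lra|]. split.
  - assert (X <= l * a * X) by (assert (1 <= l*a) by nra; nra).
    assert (Y <= l * c * Y) by nra. nra.
  - assert (a * X <= l * X) by nra. assert (c * Y <= l * Y) by nra. nra.
Qed.

Lemma main_ineq t : 0 <= t ->
  / Cc * Eminus e mm K xi B1 B2 0 <= Eminus e mm K xi B1 B2 t /\
  Eminus e mm K xi B1 B2 t <= Cc * Eminus e mm K xi B1 B2 0 /\
  sqrt (/ (3 * L^2 * Cc)) * normB B1 B2 0 <= normB B1 B2 t /\
  normB B1 B2 t <= sqrt (3 * L^2 * Cc) * normB B1 B2 0.
Proof.
  intros Ht. rewrite !HE.
  pose proof (En_upper t Ht) as U. pose proof (En_lower t Ht) as Lo.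
  fold Cc in U, Lo.
  assert (HCc : 0 < Cc) by apply exp_pos.
  assert (HL : 1 <= L).
  { unfold L. pose proof PI_RGT_0. pose proof (pow2_ge_0 e). assert (0 <= 4*PI*e^2) by (apply Rmult_le_pos; lra). lra. }
  split.
  { apply (Rmult_le_reg_l Cc); auto. rewrite <- Rmult_assoc, Rinv_r by lra. lra. }
  split; [exact U|].
  destruct (dE_bound 0) as [A0 [B0 _]]. destruct (dE_bound t) as [At [Bt _]].
  fold (S 0) in A0, B0. fold (S t) in At, Bt.
  destruct (N_S 0) as [N0 [NS0 SN0]]. destruct (N_S t) as [Nt [NSt SNt]].
  assert (HNB : forall s, normB B1 B2 s = sqrt (N s)).
  { intros s. unfold normB, N. rewrite !Cmod2. reflexivity. }
  rewrite !HNB.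
  assert (HL2 : 0 < 3 * L^2 * Cc) by (apply Rmult_lt_0_compat; [nra|lra]).
  split.
  - rewrite <- sqrt_mult by (try apply Rlt_le, Rinv_0_lt_compat; lra).
    apply sqrt_le_1_alt.
    assert (N 0 <= 3 * L^2 * Cc * N t).
    { assert (N 0 <= L * (2 * En 0)) by (apply Rle_trans with (L * S 0); [lra| apply Rmult_le_compat_l; lra]).
      assert (L * (2 * En 0) <= L * (2 * (Cc * En t))) by (apply Rmult_le_compat_l; lra).
      assert (En t <= 3 * S t / 2) by lra.
      assert (Cc * En t <= Cc * (3 * S t / 2)) by (apply Rmult_le_compat_l; lra).
      assert (Cc * S t <= Cc * (L * N t)) by (apply Rmult_le_compat_l; lra).
      assert (L * (2 * (Cc * (3 * S t / 2))) <= L * (3 * (Cc * (L * N t)))) by (apply Rmult_le_compat_l; lra).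
      assert (L * (2 * (Cc * En t)) <= L * (2 * (Cc * (3 * S t / 2)))) by (apply Rmult_le_compat_l; lra).
      replace (3 * L^2 * Cc * N t) with (L * (3 * (Cc * (L * N t)))) by ring. lra. }
    replace (/ (3 * L ^ 2 * Cc) * N 0) with (N 0 / (3 * L ^ 2 * Cc)) by (field; lra).
    apply (Rmult_le_reg_r (3 * L^2 * Cc)); auto. unfold Rdiv. rewrite Rmult_assoc, Rinv_l by lra. lra.
  - rewrite <- sqrt_mult by lra. apply sqrt_le_1_alt.
    assert (N t <= L * (2 * En t)) by (apply Rle_trans with (L * S t); [lra| apply Rmult_le_compat_l; lra]).
    assert (L * (2 * En t) <= L * (2 * (Cc * En 0))) by (apply Rmult_le_compat_l; lra).
    assert (Cc * En 0 <= Cc * (3 * S 0 / 2)) by (apply Rmult_le_compat_l; lra).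
    assert (Cc * S 0 <= Cc * (L * N 0)) by (apply Rmult_le_compat_l; lra).
    assert (L * (2 * (Cc * (3 * S 0 / 2))) <= L * (3 * (Cc * (L * N 0)))) by (apply Rmult_le_compat_l; lra).
    assert (L * (2 * (Cc * En 0)) <= L * (2 * (Cc * (3 * S 0 / 2)))) by (apply Rmult_le_compat_l; lra).
    replace (3 * L^2 * Cc * N 0) with (L * (3 * (Cc * (L * N 0)))) by ring. lra.
Qed.
End W.

Theorem lemma4p1 (e mm : R) (he : 0 < e) (hm : 0 < mm) :
  exists C1 C1' C2 C2' : R,
    0 < C1 /\ C1 <= C1' /\ 0 < C2 /\ C2 <= C2' /\
    forall (k : Z) (xi : R) (B1 B2 : R -> C),
      k <> 0%Z ->
      is_solution e mm (IZR k) xi B1 B2 ->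
      forall t, 0 <= t ->
        C1 * Eminus e mm (IZR k) xi B1 B2 0 <= Eminus e mm (IZR k) xi B1 B2 t /\
        Eminus e mm (IZR k) xi B1 B2 t <= C1' * Eminus e mm (IZR k) xi B1 B2 0 /\
        C2 * normB B1 B2 0 <= normB B1 B2 t /\
        normB B1 B2 t <= C2' * normB B1 B2 0.
Proof.
  set (D := 2*((4*PI*e^2 + 4*mm)/2 + sqrt mm)).
  set (L := 1 + 4*PI*e^2 + 2*mm).
  set (Cc := exp (D*PI)).
  assert (HD : 0 <= D).
  { unfold D. pose proof PI_RGT_0. pose proof (pow2_ge_0 e). pose proof (sqrt_pos mm).
    assert (0 <= 4*PI*e^2) by (apply Rmult_le_pos; lra). lra. }
  assert (HC : 1 <= Cc).
  { unfold Cc. pose proof PI_RGT_0. rewrite <- exp_0. destruct (Rle_lt_or_eq_dec 0 (D*PI)).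
    apply Rmult_le_pos; lra. apply Rlt_le, exp_increasing; auto. rewrite <- e0. lra. }
  assert (HL : 1 <= L).
  { unfold L. pose proof PI_RGT_0. pose proof (pow2_ge_0 e). assert (0 <= 4*PI*e^2) by (apply Rmult_le_pos; lra). lra. }
  assert (HX : 1 <= 3 * L^2 * Cc).
  { assert (1 <= L^2) by nra. assert (3 <= 3 * L^2) by lra. nra. }
  exists (/ Cc), Cc, (sqrt (/ (3 * L^2 * Cc))), (sqrt (3 * L^2 * Cc)).
  split; [apply Rinv_0_lt_compat; lra|].
  split.
  { apply Rle_trans with 1; [|lra]. rewrite <- Rinv_1. apply Rinv_le_contravar; lra. }
  split; [apply sqrt_lt_R0, Rinv_0_lt_compat; lra|].
  split.
  { apply sqrt_le_1_alt. apply Rle_trans with 1; [|lra]. rewrite <- Rinv_1. apply Rinv_le_contravar; lra. }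
  intros k xi B1 B2 hk sol t ht.
  exact (main_ineq e mm (IZR k) xi B1 B2 hm (K2 k hk) sol t ht).
Qed.
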